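(* Let $s\geq 2$ and let $n_1>n_2>\cdots>n_s\geq 2$ be integers. Let $X_{n_1,\ldots,n_s}$ be the set of vectors of length $s+1$ consisting of: the vector $(n_1,n_2,\ldots,n_s,1)$; the set $X_s^s=\{(j,\ldots,j,0),(j,\ldots,j,1): j\in\{1,\ldots,n_s\}\}$, where $j$ is repeated in the first $s$ coordinates; and, for each $i\in\{2,\ldots,s\}$, the set $X_{i-1}^s$ of vectors $(\underbrace{n_i+k,\ldots,n_i+k}_{i-1},\underbrace{1,\ldots,1}_{s-i+1},0)$ and $(\underbrace{n_i+k,\ldots,n_i+k}_{i-1},n_i,n_{i+1},\ldots,n_s,1)$ for $k\in\{0,1,\ldots,n_{i-1}-n_i-1\}$. Let $\mathcal B_{n_1,\ldots,n_s}$ consist of all $3$-element subsets $\{\alpha_1,\alpha_2,\alpha_3\}\subseteq X_{n_1,\ldots,n_s}$ such that for every coordinate $j\in\{1,\ldots,s+1\}$ the set $\{\alpha_{1(j)},\alpha_{2(j)},\alpha_{3(j)}\}$ has exactly $2$ elements, together with the additional triple $\{(1,\ldots,1,1,0),(n_s,\ldots,n_s,1,0),(n_s,\ldots,n_s,n_s,0)\}$ (here the first vector has its first $s$ entries equal to $1$; the second has its first $s-1$ entries equal to $n_s$ and $s$-th entry $1$; the third has its first $s$ entries equal to $n_s$; all three have last entry $0$). Then the $3$-uniform bi-hypergraph $\mathcal H_{n_1,\ldots,n_s}=(X_{n_1,\ldots,n_s},\mathcal B_{n_1,\ldots,n_s})$ is a one-realization of $\{n_1,n_2,\ldots,n_s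\}$.
   Context: A bi-hypergraph $(X,\mathcal B)$ is a mixed hypergraph whose $\mathcal C$-edges and $\mathcal D$-edges both equal $\mathcal B$. A strict $k$-coloring is a partition of $X$ into exactly $k$ nonempty classes such that every edge of $\mathcal B$ contains two vertices of a common class and two vertices of distinct classes. The feasible set is the set of $k$ admitting a strict $k$-coloring; the chromatic spectrum lists, for $k=1,\ldots,\max$ of the feasible set, the number of strict $k$-colorings (as partitions). A one-realization of a set $S$ is a mixed hypergraph whose feasible set is $S$ and whose chromatic spectrum has all entries in $\{0,1\}$. $\alpha_{l(j)}$ denotes the $j$-th entry of $\alpha_l$. *)

(* Defs.v *)
From mathcomp Require Import all_boot.
Set Implicit Arguments. Unset Strict Implicit. Unset Printing Implicit Defensive.

Section MixedHypergraph.
Variable V : finType.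

Definition strict_coloring (C D : {set {set V}}) (P : {set {set V}}) : bool :=
  [&& partition P [set: V],
      [forall E in C, exists x in E, exists y in E,
          (x != y) && (pblock P x == pblock P y)]
    & [forall E in D, exists x in E, exists y in E, pblock P x != pblock P y]].

Definition n_colorings (C D : {set {set V}}) (k : nat) : nat :=
  #|[set P : {set {set V}} | strict_coloring C D P && (#|P| == k)]|.

Definition feasible (C D : {set {set V}}) (k : nat) : Prop :=
  exists P : {set {set V}}, strict_coloring C D P /\ #|P| = k.

Definition one_realization (C D : {set {set V}}) (S : seq nat) : Prop :=
  (forall k, feasible C D k <-> k \in S) /\ (forall k, n_colorings C D k <= 1).

End MixedHypergraph.

(* ns = [:: n_1; ...; n_s];  n_i = nth 0 ns i.-1  (1-indexed i). *)

Definition nth_n (ns : seq nat) (i : nat) : nat := nth 0 ns i.-1.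

Definition Xtop (ns : seq nat) : seq nat := rcons ns 1.

Definition Xss (s : nat) (ns : seq nat) : seq (seq nat) :=
  flatten [seq [:: rcons (nseq s j) 0; rcons (nseq s j) 1]
          | j <- iota 1 (nth_n ns s)].

(* X_{i-1}^s for 2 <= i <= s *)
Definition Xi (s : nat) (ns : seq nat) (i : nat) : seq (seq nat) :=
  flatten [seq [:: nseq i.-1 (nth_n ns i + k) ++ nseq (s - i + 1) 1 ++ [:: 0];
                   nseq i.-1 (nth_n ns i + k) ++ drop i.-1 ns ++ [:: 1]]
          | k <- iota 0 (nth_n ns i.-1 - nth_n ns i)].

Definition Xset (s : nat) (ns : seq nat) : seq (seq nat) :=
  undup (Xtop ns :: Xss s ns ++ flatten [seq Xi s ns i | i <- iota 2 s.-1]).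

Definition vtx (s : nat) (ns : seq nat) : finType := seq_sub (Xset s ns).

Definition coord_ok (s : nat) (ns : seq nat) (E : {set vtx s ns}) : bool :=
  [forall j : 'I_s.+1, size (undup [seq nth 0 (val v) j | v <- enum E]) == 2].

Definition extra_triple (s : nat) (ns : seq nat) : seq (seq nat) :=
  [:: rcons (nseq s 1) 0;
      nseq s.-1 (nth_n ns s) ++ [:: 1; 0];
      rcons (nseq s (nth_n ns s)) 0].

Definition Bedges (s : nat) (ns : seq nat) : {set {set vtx s ns}} :=
  [set E : {set vtx s ns} |
     ((#|E| == 3) && coord_ok E) ||
     (E == [set v : vtx s ns | val v \in extra_triple s ns])].

(* Main.v *)
Require Import Defs.
From mathcomp Require Import all_boot zify.
Set Implicit Arguments. Unset Strict Implicit. Unset Printing Implicit Defensive.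

Section Core.
Variable K : eqType.

Definition ex1 (a b c : K) :=
  ((a == b) || (b == c) || (a == c)) && ~~ ((a == b) && (b == c)).

Lemma ex1_nn_ac a b c : ex1 a b c -> a != b -> b != c -> a = c.
Proof. by case/andP; do 3 case: eqP. Qed.
Lemma ex1_nn_bc a b c : ex1 a b c -> a != b -> a != c -> b = c.
Proof. by case/andP; do 3 case: eqP. Qed.
Lemma ex1_nn_ab a b c : ex1 a b c -> a != c -> b != c -> a = b.
Proof. by case/andP; do 3 case: eqP. Qed.
Lemma ex1_ab a b c : ex1 a b c -> a = b -> b != c.
Proof. by move=> + ab; rewrite /ex1 ab eqxx /=; case: eqP. Qed.
Lemma ex1_ab' a b c : ex1 a b c -> a = b -> a != c.
Proof. by move=> + ab; rewrite /ex1 ab eqxx /=; case: eqP. Qed.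
Lemma ex1_bc a b c : ex1 a b c -> b = c -> a != b.
Proof. by move=> + bc; rewrite /ex1 bc eqxx /= andbT; case: eqP. Qed.
Lemma ex1_ac a b c : ex1 a b c -> a = c -> a != b.
Proof. by move=> + ac; rewrite /ex1 ac eqxx /= orbT /=; case: eqP => // ->; rewrite eqxx. Qed.
Lemma ex1_ac' a b c : ex1 a b c -> a = c -> b != c.
Proof. by move=> + ac; rewrite /ex1 ac eqxx /= orbT /= eq_sym; case: eqP => // ->; rewrite eqxx. Qed.

Variables (cw cu : nat -> K) (ca : K) (N m : nat) (isn : nat -> bool).
Hypothesis m2 : 2 <= m.
Hypothesis mN : m < N.
Hypothesis isnN : isn N.
Hypothesis isnm : isn m.
Hypothesis E1 : forall x y, 1 <= x -> x < y -> y <= N -> ex1 (cw x) (cw y) (cu x).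
Hypothesis E2 : forall y, 1 < y -> y < N -> ex1 (cw 1) (cw y) (cu y).
Hypothesis E3 : forall x, 1 <= x -> x.+1 < N -> ~~ isn x.+1 ->
  ex1 (cw x) (cw x.+1) (cu x.+1).
Hypothesis E4 : forall x, 1 <= x -> x.+1 < N -> (2 <= x) || (x.+1 < m) ->
  ex1 (cw x) (cu x) (cu x.+1).
Hypothesis E5 : forall z, 1 < z -> z < N -> ex1 (cw z) (cu 1) (cu z).
Hypothesis E6 : ex1 (cw 1) (cw m) ca.
Hypothesis E7 : ex1 (cw 1) (cu 1) ca.
Hypothesis E8 : ex1 (cw m) (cu 1) ca.
Hypothesis E9 : ex1 (cw 1) (cu m) ca.
Hypothesis E10 : ex1 (cu 1) (cu m) ca.

Ltac clia := repeat match goal with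
  | H : forall _, _ |- _ => clear H
  | H : context[cw] |- _ => clear H
  | H : context[cu] |- _ => clear H
  | H : context[ca] |- _ => clear H
  | H : context[isn] |- _ => clear H
  end; lia.

Lemma core : exists T, [/\ isn T, 2 <= T <= N,
  (forall x y, 1 <= x <= N -> 1 <= y <= N ->
      (cw x == cw y) = (minn x T == minn y T)),
  (forall x, 1 <= x < N -> cu x = cw (if x < T then x else 1)) &
  ca = cw m].
Proof.
have exP : exists x, (x == N) || [&& 1 <= x, x < N & cu x != cw x].
  by exists N; rewrite eqxx.
case: (ex_minnP exP) => T HT Tmin.
have TN : T <= N by apply: Tmin; rewrite eqxx.
have T1 : 1 <= T.
  by case/orP: HT => [/eqP->|/and3P[]//]; clia.
have good x : 1 <= x -> x < T -> cu x = cw x.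
  move=> x1; apply: contraTeq => H; rewrite -leqNgt.
  case: (ltnP x N) => xN; last exact: leq_trans TN xN.
  by apply: Tmin; rewrite x1 xN H orbT.
have badT : T < N -> cu T != cw T.
  by move=> TltN; case/orP: HT => [/eqP E|/and3P[]//]; clia.
have sepW x y : 1 <= x -> x < y -> y <= N -> x < T -> cw x != cw y.
  move=> x1 xy yN xT; apply: (ex1_ac (E1 x1 xy yN)); apply/esym/good => //.
have T2 : 2 <= T.
  case: (ltngtP T 1) => // [|T1e]; first by clia.
  have b1 : cu 1 != cw 1 by rewrite -T1e; apply: badT; clia.
  have m1 : 1 < m by clia.
  case: (boolP (cw 1 == cw m)) => [/eqP h|h].
  - have h1 := ex1_ab E6 h; have h2 := ex1_ab' E6 h.
    have h3 := ex1_nn_bc E7 ltac:(by rewrite eq_sym) h2.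
    have h4 : cu m != ca.
      exact: (ex1_ac' E10 h3).
    have h5 := ex1_nn_ab E9 h2 h4.
    have := E2 m1 mN; rewrite /ex1 -h5 -h !eqxx //.
  - have h' := ex1_nn_bc (E1 (leqnn 1) m1 (ltnW mN)) h ltac:(by rewrite eq_sym).
    have h1 := ex1_ab E8 h'; have h2 := ex1_ab' E8 h'.
    have h3 : cw 1 != cu 1 by rewrite eq_sym.
    have h4 : cw m != ca.
      by apply: contraTneq h2 => <-; rewrite h' eqxx.
    have h5 := ex1_nn_ac E6 h h4.
    have h6 := ex1_ac' E9 h5.
    have h7 := ex1_nn_ab E10 h1 h6.
    have := E5 m1 mN; rewrite /ex1 h' h7 !eqxx //.
have isnT : isn T.
  case: (ltngtP T N) => [TltN||->] //; last by clia.
  apply: contraT => nT.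
  have x1 : 1 <= T.-1 by clia.
  have xS : T.-1.+1 = T by clia.
  have e3 := E3 x1 ltac:(by rewrite xS) ltac:(by rewrite xS).
  rewrite xS in e3.
  have g := good _ x1 ltac:(by clia).
  have s1 := sepW T.-1 T x1 ltac:(by clia) TN ltac:(by clia).
  have h := ex1_nn_ac e3 s1 ltac:(by rewrite eq_sym badT).
  have hx : (2 <= T.-1) || (T.-1.+1 < m).
    case: (leqP 2 T.-1) => /= [//|T2x]; rewrite xS.
    case: (ltngtP T m) => [//|mT|Tm]; first by move: mT; clia.
    by move: nT; rewrite Tm isnm.
  have e4 := E4 x1 ltac:(by rewrite xS) hx; rewrite xS in e4.
  by move: e4; rewrite /ex1 g -h !eqxx.
have TltN' : T < N -> T < N by [].
have wT y : T <= y <= N -> cw y = cw T.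
  case/andP => Ty yN; case: (ltngtP T y) => [Tlt|yT|<-]; [|by clia|by []].
  have TltN : T < N by clia.
  have e1 := E1 T1 Tlt yN.
  case: (boolP (cw T == cw y)) => [/eqP //|ne].
  have h := ex1_nn_bc e1 ne ltac:(by rewrite eq_sym badT) ; exfalso.
  have y1 : 1 < y by clia.
  have w1 : cw 1 = cu T.
    apply: (ex1_nn_ac (E2 T2 TltN)) => //.
      by apply: sepW => //; clia.
    by rewrite eq_sym badT.
  have := E1 (leqnn 1) y1 yN.
  by rewrite /ex1 (good 1 (leqnn 1) ltac:(by clia)) w1 h !eqxx.
exists T; split => //; first by rewrite T2 TN.
- move=> x y /andP[x1 xN] /andP[y1 yN].
  wlog xy : x y x1 xN y1 yN / x <= y.
    move=> W; case: (leqP x y) => [|/ltnW]; first exact: W.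
    by move=> yx; rewrite eq_sym [in RHS]eq_sym; apply: W.
  case: (ltngtP x y) => [xlty|yltx|->]; [|by clia|by rewrite !eqxx].
  case: (ltnP x T) => xT.
    rewrite (negbTE (sepW x y x1 xlty yN xT)) ?(elimT minn_idPl (ltnW xT)).
    apply/esym/negbTE; case: (leqP y T) => yT.
      by rewrite neq_ltn xlty.
    by rewrite neq_ltn xT.
  have Ty : T <= y := leq_trans xT (ltnW xlty).
  rewrite (wT x) ?xT ?(leq_trans (ltnW xlty) yN) // (wT y) ?Ty ?yN //.
  by rewrite ?(elimT minn_idPr xT) ?(elimT minn_idPr Ty) ?eqxx.
- move=> x /andP[x1 xN].
  case: (ltnP x T) => xT /=; first exact: good.
  have TltN : T < N by clia.
  have ne : cu x != cw x.
    have e1 := E1 x1 xN (leqnn N).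
    by rewrite eq_sym; apply: (ex1_ab' e1); rewrite (wT x) ?(wT N) //; clia.
  case: (ltngtP x 1) => [|x1'|]; [by clia| |by clia].
  apply: esym; apply: (ex1_nn_ac (E2 x1' xN)).
    exact: (sepW 1 x (leqnn 1) x1' (ltnW xN) T2).
  by rewrite eq_sym.
- have T1' : 1 < T by clia.
  have m1 : 1 < m by clia.
  have h1 : cw 1 != cw m := sepW 1 m (leqnn 1) m1 (ltnW mN) T2.
  have h2 : cw 1 != ca := ex1_ab' E7 (esym (good 1 (leqnn 1) T2)).
  exact: esym (ex1_nn_bc E6 h1 h2).
Qed.
End Core.

Section Lists.
Variables (s : nat) (ns : seq nat).
Hypothesis s2 : 2 <= s.
Hypothesis sz : size ns = s.
Hypothesis srt : sorted (fun a b => b < a) ns.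
Hypothesis m2 : 2 <= nth 0 ns s.-1.

Local Notation c j := (nth 0 ns j).
Local Notation m := (nth 0 ns s.-1).
Local Notation N := (nth 0 ns 0).

Lemma c_lt i j : i < j -> j < s -> c j < c i.
Proof.
move=> ij js.
have tr : transitive (fun a b : nat => b < a).
  by move=> y x z /= h1 h2; exact: ltn_trans h2 h1.
by apply: (sorted_ltn_nth tr 0 srt) => //=; rewrite ?inE /= sz //; exact: ltn_trans ij js.
Qed.

Lemma c_le i j : i <= j -> j < s -> c j <= c i.
Proof.
rewrite leq_eqVlt => /orP[/eqP->|ij] js //.
exact/ltnW/c_lt.
Qed.

Lemma c_ge_m j : j < s -> m <= c j.
Proof. by move=> js; apply: c_le => //; lia. Qed.

Lemma c_le_N j : j < s -> c j <= N.
Proof. by move=> js; apply: c_le. Qed.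

Lemma mN : m < N.
Proof. by apply: c_lt; lia. Qed.

Lemma c_in j : j < s -> c j \in ns.
Proof. by move=> js; apply: mem_nth; rewrite sz. Qed.

Lemma in_c y : y \in ns -> exists2 j, j < s & c j = y.
Proof.
by move=> yn; exists (index y ns); [rewrite -sz index_mem | apply: nth_index].
Qed.

Definition wl x := mkseq (fun j => if j < s then (if x < c j then x else c j) else 1) s.+1.
Definition ul x := mkseq (fun j => if j < s then (if x < c j then x else 1) else 0) s.+1.
Definition al := mkseq (fun j => if j < s then m else 0) s.+1.

Lemma eq_mk (l : seq nat) f : size l = s.+1 ->
  (forall j, j < s -> nth 0 l j = f j) -> nth 0 l s = f s -> l = mkseq f s.+1.
Proof.
move=> szl H Hs; apply: (@eq_from_nth _ 0); first by rewrite size_mkseq.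
move=> j; rewrite szl => js; rewrite nth_mkseq //.
case: (ltnP j s) => [jl|jg]; first exact: H.
by have -> : j = s by apply/eqP; rewrite eqn_leq -ltnS js jg.
Qed.

Lemma Xtop_w : Xtop ns = wl N.
Proof.
rewrite /Xtop; apply: eq_mk; first by rewrite size_rcons sz.
  move=> j js /=; rewrite nth_rcons sz js ltnNge (c_le_N js) //.
by rewrite /= nth_rcons sz ltnn eqxx.
Qed.


Lemma Xss_w j : 1 <= j <= m -> rcons (nseq s j) 1 = wl j.
Proof.
move=> /andP[j1 jm]; apply: eq_mk; first by rewrite size_rcons size_nseq.
  move=> i iS /=; rewrite nth_rcons size_nseq iS nth_nseq iS.
  have := c_ge_m iS; case: ltnP => // H1 H2; lia.
by rewrite /= nth_rcons size_nseq ltnn eqxx.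
Qed.

Lemma Xss_u j : 1 <= j < m -> rcons (nseq s j) 0 = ul j.
Proof.
move=> /andP[j1 jm]; apply: eq_mk; first by rewrite size_rcons size_nseq.
  move=> i iS /=; rewrite nth_rcons size_nseq iS nth_nseq iS.
  have := c_ge_m iS; case: ltnP => // H1 H2; lia.
by rewrite /= nth_rcons size_nseq ltnn eqxx.
Qed.

Lemma Xss_a : rcons (nseq s m) 0 = al.
Proof.
apply: eq_mk; first by rewrite size_rcons size_nseq.
  by move=> i iS /=; rewrite nth_rcons size_nseq iS nth_nseq iS.
by rewrite /= nth_rcons size_nseq ltnn eqxx.
Qed.

Lemma Xi_wu i k : 2 <= i <= s -> k < c i.-2 - c i.-1 ->
  nseq i.-1 (c i.-1 + k) ++ nseq (s - i + 1) 1 ++ [:: 0] = ul (c i.-1 + k) /\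
  nseq i.-1 (c i.-1 + k) ++ drop i.-1 ns ++ [:: 1] = wl (c i.-1 + k).
Proof.
move=> /andP[i2 iS] hk.
have lt1 : c i.-1 < c i.-2 by apply: c_lt; lia.
split; apply: eq_mk.
- by rewrite !size_cat !size_nseq /=; lia.
- move=> j js /=; rewrite nth_cat size_nseq nth_nseq js.
  case: (ltnP j i.-1) => ji.
    have : c i.-2 <= c j by apply: c_le; lia.
    by case: ltnP => //; lia.
  rewrite nth_cat size_nseq nth_nseq (_ : j - i.-1 < s - i + 1); last by lia.
  have : c j <= c i.-1 by apply: c_le; lia.
  by case: ltnP => //; lia.
- rewrite /= nth_cat size_nseq ltnNge (_ : i.-1 <= s); last by lia.
  rewrite nth_cat size_nseq ltnNge (_ : s - i + 1 <= s - i.-1); last by lia.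
  by rewrite /= (_ : s - i.-1 - (s - i + 1) = 0) ?ltnn //; lia.
- by rewrite !size_cat size_nseq size_drop sz /=; lia.
- move=> j js /=; rewrite nth_cat size_nseq nth_nseq js.
  case: (ltnP j i.-1) => ji.
    have : c i.-2 <= c j by apply: c_le; lia.
    by case: ltnP => //; lia.
  rewrite nth_cat size_drop sz (_ : j - i.-1 < s - i.-1); last by lia.
  rewrite nth_drop (_ : i.-1 + (j - i.-1) = j); last by lia.
  have : c j <= c i.-1 by apply: c_le; lia.
  by case: ltnP => //; lia.
- rewrite /= nth_cat size_nseq ltnNge (_ : i.-1 <= s); last by lia.
  rewrite nth_cat size_drop sz ltnn /= ltnn.
  by rewrite (_ : s - i.-1 - (s - i.-1) = 0) ?subnn.
Qed.

Lemma find_block x : m <= x < N -> exists i k,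
  [/\ 2 <= i <= s, k < c i.-2 - c i.-1 & x = c i.-1 + k].
Proof.
move=> /andP[mx xN].
set p := find (fun n => n <= x) ns.
have hs : has (fun n => n <= x) ns.
  by apply/hasP; exists m => //; apply: mem_nth; rewrite sz; lia.
have ps : p < s by rewrite -sz -has_find.
have cp : c p <= x by have := nth_find 0 hs.
have p1 : 0 < p.
  case: (posnP p) => // p0; move: cp; rewrite p0; lia.
have cp1 : x < c p.-1.
  have pp : p.-1 < p by lia.
  have := before_find 0 pp; rewrite /= => H.
  by rewrite ltnNge H.
exists p.+1, (x - c p); split; rewrite /=.
- lia.
- simpl.
  lia.
- lia.
Qed.

Lemma Xi_mem i k : 2 <= i <= s -> k < c i.-2 - c i.-1 ->
  ul (c i.-1 + k) \in Xset s ns /\ wl (c i.-1 + k) \in Xset s ns.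
Proof.
move=> hi hk; have [e1 e2] := Xi_wu hi hk.
have iin : i \in iota 2 s.-1 by rewrite mem_iota; lia.
have kin : k \in iota 0 (nth_n ns i.-1 - nth_n ns i) by rewrite mem_iota.
split; rewrite /Xset mem_undup in_cons mem_cat; apply/orP; right; apply/orP; right;
  apply/flatten_mapP; exists i => //; apply/flatten_mapP; exists k => //;
  by rewrite !inE ?e1 ?e2 eqxx ?orbT.
Qed.

Lemma w_in x : 1 <= x <= N -> wl x \in Xset s ns.
Proof.
move=> /andP[x1 xN].
case: (leqP x m) => xm.
  rewrite -Xss_w ?x1 // /Xset mem_undup in_cons mem_cat /Xss; apply/orP; right.
  apply/orP; left; apply/flatten_mapP; exists x; first by rewrite mem_iota /nth_n; lia.
  by rewrite !inE eqxx orbT.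
case: (ltngtP x N) => [xlt|Nx|->]; [|lia|by rewrite -Xtop_w /Xset mem_undup in_cons eqxx].
have [i [k [hi hk ->]]] : exists i k, [/\ 2 <= i <= s, k < c i.-2 - c i.-1 & x = c i.-1 + k] by apply: find_block; lia.
by case: (Xi_mem hi hk).
Qed.

Lemma u_in x : 1 <= x < N -> ul x \in Xset s ns.
Proof.
move=> /andP[x1 xN].
case: (ltnP x m) => xm.
  rewrite -Xss_u ?x1 // /Xset mem_undup in_cons mem_cat /Xss; apply/orP; right.
  apply/orP; left; apply/flatten_mapP; exists x; first by rewrite mem_iota /nth_n; lia.
  by rewrite !inE eqxx.
have [i [k [hi hk ->]]] : exists i k, [/\ 2 <= i <= s, k < c i.-2 - c i.-1 & x = c i.-1 + k] by apply: find_block; lia.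
by case: (Xi_mem hi hk).
Qed.

Lemma a_in : al \in Xset s ns.
Proof.
rewrite -Xss_a /Xset mem_undup in_cons mem_cat /Xss; apply/orP; right.
apply/orP; left; apply/flatten_mapP; exists m; first by rewrite mem_iota /nth_n; lia.
by rewrite !inE eqxx.
Qed.

Lemma classify l : l \in Xset s ns ->
  [\/ exists2 x, 1 <= x <= N & l = wl x, exists2 x, 1 <= x < N & l = ul x | l = al].
Proof.
have mN' := mN.
rewrite /Xset mem_undup in_cons mem_cat => /orP[/eqP->|/orP[]].
- by apply: Or31; exists N; [lia | rewrite Xtop_w].
- move=> /flatten_mapP[j]; rewrite mem_iota /nth_n => hj; rewrite !inE => /orP[]/eqP->.
    case: (ltngtP j m) => [jm|mj|->]; [|lia|by apply: Or33; rewrite Xss_a].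
    by apply: Or32; exists j; [lia | rewrite Xss_u //; lia].
  by apply: Or31; exists j; [lia | rewrite Xss_w //; lia].
- move=> /flatten_mapP[i]; rewrite mem_iota => hi /flatten_mapP[k].
  rewrite mem_iota /nth_n => hk.
  have hi' : 2 <= i <= s by lia.
  have hk' : k < c i.-2 - c i.-1 by lia.
  have lt1 : c i.-1 < c i.-2 by apply: c_lt; lia.
  have hm : m <= c i.-1 by apply: c_ge_m; lia.
  have hN : c i.-2 <= N by apply: c_le_N; lia.
  have [e1 e2] := Xi_wu hi' hk'.
  rewrite !inE => /orP[]/eqP->.
    by apply: Or32; exists (c i.-1 + k); [lia | rewrite e1].
  by apply: Or31; exists (c i.-1 + k); [lia | rewrite e2].
Qed.

Lemma undup3 (T : eqType) (x y z : T) :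
  (size (undup [:: x; y; z]) == 2) = ex1 x y z.
Proof.
rewrite /ex1 /= !inE; case: (x =P y) => H1; case: (x =P z) => H2;
  case: (y =P z) => H3 /=; try congruence; try done.
Qed.

Local Notation V := (vtx s ns).

Definition Av : V := SeqSub a_in.
Definition mkv (l : seq nat) : V := insubd Av l.
Definition Wv x := mkv (wl x).
Definition Uv x := mkv (ul x).

Lemma valW x : 1 <= x <= N -> val (Wv x) = wl x.
Proof. by move=> h; rewrite /Wv /mkv insubdK //; exact: w_in. Qed.
Lemma valU x : 1 <= x < N -> val (Uv x) = ul x.
Proof. by move=> h; rewrite /Wv /mkv insubdK //; exact: u_in. Qed.
Lemma valA : val Av = al.
Proof. by []. Qed.

Lemma perm3 (a b d : V) : a != b -> b != d -> a != d ->
  perm_eq (enum [set a; b; d]) [:: a; b; d].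
Proof.
move=> ab bd ad; apply: uniq_perm; first exact: enum_uniq.
  by rewrite /= !inE negb_or ab ad bd.
by move=> x; rewrite mem_enum !inE orbA.
Qed.

Lemma tri_edge (a b d : V) : a != b -> b != d -> a != d ->
  (forall j, j < s.+1 -> ex1 (nth 0 (val a) j) (nth 0 (val b) j) (nth 0 (val d) j)) ->
  [set a; b; d] \in Bedges s ns.
Proof.
move=> ab bd ad H; rewrite inE; apply/orP; left; apply/andP; split.
  by rewrite cardE (perm_size (perm3 ab bd ad)).
apply/forallP => j.
have pm := perm_map (fun v : V => nth 0 (val v) j) (perm3 ab bd ad).
rewrite (perm_size (perm_undup (perm_mem pm))) /= -/(undup [:: _; _; _]).
by rewrite undup3; apply: H.
Qed.

Lemma in3 (x a b d : V) : x \in [set a; b; d] -> [\/ x = a, x = b | x = d].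
Proof. by rewrite !inE => /orP[/orP[]|] /eqP ->; [apply: Or31|apply: Or32|apply: Or33]. Qed.

Lemma strict_ex1 P (a b d : V) : strict_coloring (Bedges s ns) (Bedges s ns) P ->
  a != b -> b != d -> a != d -> [set a; b; d] \in Bedges s ns ->
  ex1 (pblock P a) (pblock P b) (pblock P d).
Proof.
case/and3P => _ /forall_inP HC /forall_inP HD ab bd ad E.
apply/andP; split.
  have /existsP[x /andP[xE /existsP[y /andP[yE /andP[xy pxy]]]]] := HC _ E.
  by move: xy pxy; case/in3: xE => ->; case/in3: yE => ->; rewrite ?eqxx //= => _ /eqP ->;
    rewrite ?eqxx ?orbT.
have /existsP[x /andP[xE /existsP[y /andP[yE pxy]]]] := HD _ E.
apply/negP => /andP[/eqP e1 /eqP e2]; move: pxy.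
by case/in3: xE => ->; case/in3: yE => ->; rewrite ?e1 ?e2 eqxx.
Qed.

Lemma nthW x j : j < s.+1 -> nth 0 (wl x) j = if j < s then (if x < c j then x else c j) else 1.
Proof. by move=> js; rewrite nth_mkseq. Qed.
Lemma nthU x j : j < s.+1 -> nth 0 (ul x) j = if j < s then (if x < c j then x else 1) else 0.
Proof. by move=> js; rewrite nth_mkseq. Qed.
Lemma nthA j : j < s.+1 -> nth 0 al j = if j < s then m else 0.
Proof. by move=> js; rewrite nth_mkseq. Qed.

Lemma neqv (a b : V) j : nth 0 (val a) j != nth 0 (val b) j -> a != b.
Proof. by apply: contraNneq => ->. Qed.

Definition edge3 (a b d : V) :=
  [/\ a != b, b != d, a != d & [set a; b; d] \in Bedges s ns].

Ltac coords := intros ? ?;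
  match goal with H : is_true (?j < s.+1) |- _ =>
    rewrite ?nthW ?nthU ?nthA //; case: (ltnP j s) => ? /=
  end;
  try (match goal with H : is_true (?j < s) |- _ =>
    have := c_ge_m H; have := c_le_N H; have := c_in H end);
  repeat case: ifP; intros; rewrite /ex1; lia.

Lemma mkedge (a b d : V) ja jb jd :
  nth 0 (val a) ja != nth 0 (val b) ja ->
  nth 0 (val b) jb != nth 0 (val d) jb ->
  nth 0 (val a) jd != nth 0 (val d) jd ->
  (forall j, j < s.+1 -> ex1 (nth 0 (val a) j) (nth 0 (val b) j) (nth 0 (val d) j)) ->
  edge3 a b d.
Proof.
move=> h1 h2 h3 H.
have ab := neqv h1; have bd := neqv h2; have ad := neqv h3.
by split => //; apply: tri_edge.
Qed.


Ltac coordsX F := intros ? ?;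
  match goal with H : is_true (?j < s.+1) |- _ =>
    rewrite ?nthW ?nthU ?nthA //; case: (ltnP j s) => ? /=
  end;
  try (match goal with H : is_true (?j < s) |- _ =>
    have := c_ge_m H; have := c_le_N H; have := F _ H end);
  repeat case: ifP; intros; rewrite /ex1; lia.

Ltac dist := have := mN; (have : 0 < s by lia); (have : s.-1 < s by lia);
  intros; rewrite ?nthW ?nthU ?nthA //=; try lia;
  repeat case: ifP; intros; lia.

Lemma ed1 x y : 1 <= x -> x < y -> y <= N -> edge3 (Wv x) (Wv y) (Uv x).
Proof.
move=> x1 xy yN; have xN : x < N by lia.
have e1 : val (Wv x) = wl x by apply: valW; lia.
have e2 : val (Wv y) = wl y by apply: valW; lia.
have e3 : val (Uv x) = ul x by apply: valU; lia.
apply: (mkedge (ja:=0) (jb:=s) (jd:=s)); rewrite ?e1 ?e2 ?e3.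
- dist.
- dist.
- dist.
- coords.
Qed.

Lemma ed2 y : 1 < y -> y < N -> edge3 (Wv 1) (Wv y) (Uv y).
Proof.
move=> y1 yN.
have e1 : val (Wv 1) = wl 1 by apply: valW; have := mN; lia.
have e2 : val (Wv y) = wl y by apply: valW; lia.
have e3 : val (Uv y) = ul y by apply: valU; lia.
by apply: (mkedge (ja:=0) (jb:=s) (jd:=s)); rewrite ?e1 ?e2 ?e3; [dist|dist|dist|coords].
Qed.

Lemma ed3 x : 1 <= x -> x.+1 < N -> ~~ (x.+1 \in ns) ->
  edge3 (Wv x) (Wv x.+1) (Uv x.+1).
Proof.
move=> x1 xN nx.
have hne j : j < s -> c j != x.+1.
  by move=> js; apply: contraNneq nx => <-; apply: c_in.
have e1 : val (Wv x) = wl x by apply: valW; lia.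
have e2 : val (Wv x.+1) = wl x.+1 by apply: valW; lia.
have e3 : val (Uv x.+1) = ul x.+1 by apply: valU; lia.
by apply: (mkedge (ja:=0) (jb:=s) (jd:=s)); rewrite ?e1 ?e2 ?e3; [dist|dist|dist|coordsX hne].
Qed.

Lemma ed4 x : 1 <= x -> x.+1 < N -> (2 <= x) || (x.+1 < m) ->
  edge3 (Wv x) (Uv x) (Uv x.+1).
Proof.
move=> x1 xN hx.
have e1 : val (Wv x) = wl x by apply: valW; lia.
have e2 : val (Uv x) = ul x by apply: valU; lia.
have e3 : val (Uv x.+1) = ul x.+1 by apply: valU; lia.
by apply: (mkedge (ja:=s) (jb:=0) (jd:=s)); rewrite ?e1 ?e2 ?e3; [dist|dist|dist|coords].
Qed.

Lemma ed5 z : 1 < z -> z < N -> edge3 (Wv z) (Uv 1) (Uv z).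
Proof.
move=> z1 zN.
have e1 : val (Wv z) = wl z by apply: valW; lia.
have e2 : val (Uv 1) = ul 1 by apply: valU; lia.
have e3 : val (Uv z) = ul z by apply: valU; lia.
by apply: (mkedge (ja:=s) (jb:=0) (jd:=s)); rewrite ?e1 ?e2 ?e3; [dist|dist|dist|coords].
Qed.

Lemma ed6 : edge3 (Wv 1) (Wv m) Av.
Proof.
have := mN => mN'.
have e1 : val (Wv 1) = wl 1 by apply: valW; lia.
have e2 : val (Wv m) = wl m by apply: valW; lia.
by apply: (mkedge (ja:=0) (jb:=s) (jd:=s)); rewrite ?e1 ?e2 ?valA; [dist|dist|dist|coords].
Qed.

Lemma ed7 : edge3 (Wv 1) (Uv 1) Av.
Proof.
have := mN => mN'.
have e1 : val (Wv 1) = wl 1 by apply: valW; lia.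
have e2 : val (Uv 1) = ul 1 by apply: valU; lia.
by apply: (mkedge (ja:=s) (jb:=0) (jd:=s)); rewrite ?e1 ?e2 ?valA; [dist|dist|dist|coords].
Qed.

Lemma ed8 : edge3 (Wv m) (Uv 1) Av.
Proof.
have := mN => mN'.
have e1 : val (Wv m) = wl m by apply: valW; lia.
have e2 : val (Uv 1) = ul 1 by apply: valU; lia.
by apply: (mkedge (ja:=s) (jb:=0) (jd:=s)); rewrite ?e1 ?e2 ?valA; [dist|dist|dist|coords].
Qed.

Lemma ed9 : edge3 (Wv 1) (Uv m) Av.
Proof.
have := mN => mN'.
have e1 : val (Wv 1) = wl 1 by apply: valW; lia.
have e2 : val (Uv m) = ul m by apply: valU; lia.
by apply: (mkedge (ja:=s) (jb:=s.-1) (jd:=s)); rewrite ?e1 ?e2 ?valA; [dist|dist|dist|coords].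
Qed.

Lemma extra_eq : extra_triple s ns = [:: ul 1; ul m; al].
Proof.
rewrite /extra_triple /nth_n; congr [:: _; _; _].
- apply: eq_mk; first by rewrite size_rcons size_nseq.
    move=> j js /=; rewrite nth_rcons size_nseq js nth_nseq js.
    by have := c_ge_m js; case: ifP => //; lia.
  by rewrite /= nth_rcons size_nseq ltnn eqxx.
- apply: eq_mk; first by rewrite size_cat size_nseq /=; lia.
    move=> j js /=; rewrite nth_cat size_nseq nth_nseq js.
    case: ltnP => jm.
      have : c s.-2 <= c j by apply: c_le; lia.
      have : m < c s.-2 by apply: c_lt; lia.
      by case: ifP => //; lia.
    have -> : j = s.-1 by lia.
    by rewrite subnn /= ltnn.
  rewrite /= nth_cat size_nseq ltnNge (_ : s.-1 <= s); last by lia.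
  by rewrite (_ : s - s.-1 = 1) /= ?ltnn //; lia.
- apply: eq_mk; first by rewrite size_rcons size_nseq.
    by move=> j js /=; rewrite nth_rcons size_nseq js nth_nseq js.
  by rewrite /= nth_rcons size_nseq ltnn eqxx.
Qed.

Lemma extra_set : [set v : V | val v \in extra_triple s ns] = [set Uv 1; Uv m; Av].
Proof.
have := mN => mN'.
have e1 : val (Uv 1) = ul 1 by apply: valU; lia.
have e2 : val (Uv m) = ul m by apply: valU; lia.
apply/setP => v; rewrite [X in X = _]inE extra_eq !inE -e1 -e2 -valA.
by rewrite -!val_eqE orbA.
Qed.

Lemma ed10 : edge3 (Uv 1) (Uv m) Av.
Proof.
have := mN => mN'.
have e1 : val (Uv 1) = ul 1 by apply: valU; lia.
have e2 : val (Uv m) = ul m by apply: valU; lia.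
have ne1 : Uv 1 != Uv m by apply: (neqv (j:=0)); rewrite e1 e2; dist.
have ne2 : Uv m != Av by apply: (neqv (j:=s.-1)); rewrite e2 valA; dist.
have ne3 : Uv 1 != Av by apply: (neqv (j:=0)); rewrite e1 valA; dist.
by split => //; rewrite inE extra_set eqxx orbT.
Qed.

Definition fq q (v : V) : nat := nth 0 (val v) q.
Definition Pq q := preim_partition (fq q) [set: V].

Lemma pblock_preim (f : V -> nat) v v' :
  (pblock (preim_partition f [set: V]) v == pblock (preim_partition f [set: V]) v')
  = (f v == f v').
Proof.
have hp := preim_partitionP f [set: V].
case/and3P: (hp) => /eqP cov tI _.
have eqi : {in [set: V] & &, equivalence_rel (fun x y => f x == f y)}.
  by move=> x y z _ _ _; split => //= /eqP ->.
rewrite eq_pblock // ?cov ?inE //.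
by rewrite (pblock_equivalence_partition eqi) ?inE.
Qed.

Lemma vclass (v : V) : [\/ exists2 x, 1 <= x <= N & v = Wv x,
  exists2 x, 1 <= x < N & v = Uv x | v = Av].
Proof.
case: (classify (ssvalP v)) => [[x hx e]|[x hx e]|e].
- by apply: Or31; exists x => //; apply: val_inj; rewrite valW.
- by apply: Or32; exists x => //; apply: val_inj; rewrite valU.
- by apply: Or33; apply: val_inj; rewrite valA.
Qed.

Lemma fqW q x : q < s -> 1 <= x <= N -> fq q (Wv x) = if x < c q then x else c q.
Proof. by move=> qs hx; rewrite /fq valW // nthW ?qs //; lia. Qed.
Lemma fqU q x : q < s -> 1 <= x < N -> fq q (Uv x) = if x < c q then x else 1.
Proof. by move=> qs hx; rewrite /fq valU // nthU ?qs //; lia. Qed.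
Lemma fqA q : q < s -> fq q Av = m.
Proof. by move=> qs; rewrite /fq valA nthA ?qs //; lia. Qed.

Lemma fq_range q v : q < s -> 1 <= fq q v <= c q.
Proof.
move=> qs; have := c_ge_m qs; have := c_le_N qs; have := mN => h1 h2 h3.
case: (vclass v) => [[x hx ->]|[x hx ->]|->].
- by rewrite fqW //; case: ifP; lia.
- by rewrite fqU //; case: ifP; lia.
- by rewrite fqA //; lia.
Qed.

Lemma fqWid q i : q < s -> 1 <= i <= c q -> fq q (Wv i) = i.
Proof.
move=> qs hi; have := c_le_N qs => h.
by rewrite fqW //; [case: ifP; lia | lia].
Qed.

Lemma card_Pq q : q < s -> #|Pq q| = c q.
Proof.
move=> qs.
have hp := preim_partitionP (fq q) [set: V].
case/and3P: (hp) => /eqP cov tI n0.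
set g := fun i : 'I_(c q) => pblock (Pq q) (Wv i.+1).
have ginj : injective g.
  move=> i j /eqP; rewrite /g pblock_preim !fqWid //; try (apply/andP; split => //; exact: ltn_ord).
  by move=> /eqP [] /val_inj.
have -> : Pq q = g @: [set: 'I_(c q)].
  apply/setP => B; apply/idP/imsetP => [PB|[i _ ->]].
    have /set0Pn [v Bv] : B != set0 by apply: contraNneq n0 => <-.
    have rv := fq_range v qs.
    have lt : (fq q v).-1 < c q by lia.
    exists (Ordinal lt); rewrite ?inE //.
    rewrite /g /=; apply/esym/eqP.
    rewrite -(def_pblock tI PB Bv) pblock_preim fqWid //; last by lia.
  by rewrite /g; apply: pblock_mem; rewrite cov inE.
by rewrite card_imset // cardsT card_ord.
Qed.

Lemma coordC q (E : {set V}) : q < s -> #|E| = 3 -> coord_ok E ->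
  [exists x in E, exists y in E, (x != y) && (fq q x == fq q y)].
Proof.
move=> qs c3 /forallP ok; have {ok} := ok (Ordinal (ltnW qs : q < s.+1)).
apply: contraTT => H.
have inj : {in enum E &, injective (fq q)}.
  move=> x y; rewrite !mem_enum => xE yE fxy; apply/eqP; apply: contraNT H => nxy.
  apply/existsP; exists x; rewrite xE /=; apply/existsP; exists y.
  by rewrite yE nxy fxy eqxx.
rewrite /= undup_id; last by rewrite (map_inj_in_uniq inj) enum_uniq.
by rewrite size_map -cardE c3.
Qed.

Lemma coordD q (E : {set V}) : q < s -> #|E| = 3 -> coord_ok E ->
  [exists x in E, exists y in E, fq q x != fq q y].
Proof.
move=> qs c3 /forallP ok; have {ok} := ok (Ordinal (ltnW qs : q < s.+1)).
apply: contraTT => H.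
have /card_gt0P [x0 x0E] : 0 < #|E| by rewrite c3.
have all0 : {subset undup [seq nth 0 (val v) q | v <- enum E] <= [:: fq q x0]}.
  move=> z; rewrite mem_undup => /mapP [y]; rewrite mem_enum => yE ->.
  rewrite inE; apply: contraNT H => ne; apply/existsP; exists x0; rewrite x0E /=.
  by apply/existsP; exists y; rewrite yE eq_sym.
have := uniq_leq_size (undup_uniq _) all0.
by rewrite /=; case: (size _) => [|[|]].
Qed.

Lemma strict_Pq q : q < s -> strict_coloring (Bedges s ns) (Bedges s ns) (Pq q).
Proof.
move=> qs; apply/and3P; split; first exact: preim_partitionP.
- apply/forall_inP => E; rewrite inE => /orP[/andP[/eqP c3 ok]|/eqP ->].
    have /existsP[x /andP[xE /existsP[y /andP[yE /andP[xy fxy]]]]] := coordC qs c3 ok.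
    by apply/existsP; exists x; rewrite xE; apply/existsP; exists y; rewrite yE xy pblock_preim.
  have [n1 n2 n3 _] := ed10; rewrite extra_set.
  have h1 := c_ge_m qs; have h2 := mN.
  have u1 : fq q (Uv 1) = 1 by rewrite fqU //; [case: ifP; lia | lia].
  have um : fq q (Uv m) = if m < c q then m else 1 by rewrite fqU //; lia.
  have ua := fqA qs.
  case: (ltnP m (c q)) => hm.
    apply/existsP; exists (Uv m); rewrite !inE eqxx orbT /=.
    apply/existsP; exists Av; rewrite !inE eqxx orbT n2 pblock_preim ua um hm.
    by rewrite eqxx.
  apply/existsP; exists (Uv 1); rewrite !inE eqxx /=.
  apply/existsP; exists (Uv m); rewrite !inE eqxx orbT n1 pblock_preim u1 um.
  by rewrite ltnNge hm.
- apply/forall_inP => E; rewrite inE => /orP[/andP[/eqP c3 ok]|/eqP ->].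
    have /existsP[x /andP[xE /existsP[y /andP[yE fxy]]]] := coordD qs c3 ok.
    by apply/existsP; exists x; rewrite xE; apply/existsP; exists y; rewrite yE pblock_preim.
  have [n1 n2 n3 _] := ed10; rewrite extra_set.
  have h1 := c_ge_m qs; have h2 := mN.
  have u1 : fq q (Uv 1) = 1 by rewrite fqU //; [case: ifP; lia | lia].
  have ua := fqA qs.
  apply/existsP; exists (Uv 1); rewrite !inE eqxx /=.
  apply/existsP; exists Av; rewrite !inE eqxx orbT pblock_preim u1 ua.
  by apply/eqP; lia.
Qed.

Lemma preim_eq (f g : V -> nat) (F : V -> {set V}) :
  (forall x y, (F x == F y) = (g x == g y)) ->
  preim_partition F [set: V] = preim_partition g [set: V].
Proof.
move=> H; rewrite /preim_partition /equivalence_partition.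
by apply: eq_imset => x; apply/setP => y; rewrite !inE H.
Qed.

Lemma strict_unique P : strict_coloring (Bedges s ns) (Bedges s ns) P ->
  exists2 q, q < s & P = Pq q.
Proof.
move=> hP.
have ue a b d : edge3 a b d -> ex1 (pblock P a) (pblock P b) (pblock P d).
  by case=> n1 n2 n3 e; exact: strict_ex1 hP n1 n2 n3 e.
have isnN : N \in ns by apply: c_in; lia.
have isnm : m \in ns by apply: c_in; lia.
have [T [isnT /andP[T2 TN] Hw Hu Ha]] :=
  core (cw := fun x => pblock P (Wv x)) (cu := fun x => pblock P (Uv x))
    (ca := pblock P Av) (N := N) (m := m) (isn := fun x => x \in ns)
    m2 mN isnN isnm
    (fun x y h1 h2 h3 => ue _ _ _ (ed1 h1 h2 h3))
    (fun y h1 h2 => ue _ _ _ (ed2 h1 h2))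
    (fun x h1 h2 h3 => ue _ _ _ (ed3 h1 h2 h3))
    (fun x h1 h2 h3 => ue _ _ _ (ed4 h1 h2 h3))
    (fun z h1 h2 => ue _ _ _ (ed5 h1 h2))
    (ue _ _ _ ed6) (ue _ _ _ ed7) (ue _ _ _ ed8) (ue _ _ _ ed9) (ue _ _ _ ed10).
have [q qs cq] := in_c isnT.
exists q => //.
have hr v : pblock P v = pblock P (Wv (fq q v)).
  have hm := mN; have hcm := c_ge_m qs.
  case: (vclass v) => [[x hx ->]|[x hx ->]|->].
  - rewrite fqW //; apply/eqP; rewrite Hw //; last by rewrite cq; case: ifP; lia.
    by rewrite cq; case: ifP => H; apply/eqP; lia.
  - by rewrite fqU // cq; exact: Hu.
  - by rewrite fqA.
have rel v v' : (pblock P v == pblock P v') = (fq q v == fq q v').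
  have r1 := fq_range v qs; have r2 := fq_range v' qs.
  rewrite cq in r1 r2.
  have e1 : minn (fq q v) T = fq q v by apply/minn_idPl; lia.
  have e2 : minn (fq q v') T = fq q v' by apply/minn_idPl; lia.
  rewrite (hr v) (hr v') Hw ?e1 ?e2 //.
    by apply/andP; split; lia.
  by apply/andP; split; lia.
case/and3P: (hP) => hpart _ _.
by rewrite -(preim_partition_pblock hpart); apply: preim_eq.
Qed.

Lemma uniq_ns : uniq ns.
Proof.
apply: (sorted_uniq _ _ srt).
  by move=> y x z /= h1 h2; exact: ltn_trans h2 h1.
by move=> x /=; rewrite ltnn.
Qed.

Lemma main_thm : one_realization (Bedges s ns) (Bedges s ns) ns.
Proof.
split.
- move=> k; split.
    move=> [P [hP cP]]; have [q qs EP] := strict_unique hP.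
    by rewrite -cP EP card_Pq //; apply: c_in.
  move=> kin; have [q qs <-] := in_c kin.
  by exists (Pq q); split; [apply: strict_Pq | apply: card_Pq].
- move=> k; rewrite /n_colorings; apply/card_le1_eqP => P1 P2.
  rewrite !inE => /andP[h1 /eqP c1] /andP[h2 /eqP c2].
  have [q1 qs1 E1] := strict_unique h1; have [q2 qs2 E2] := strict_unique h2.
  have : c q1 = c q2 by rewrite -card_Pq // -E1 c1 -c2 E2 card_Pq.
  move/eqP; rewrite nth_uniq ?sz ?uniq_ns // => /eqP e.
  by rewrite E1 E2 e.
Qed.

End Lists.

Theorem theorem2p4 (s : nat) (ns : seq nat) :
  2 <= s ->
  size ns = s ->
  sorted (fun a b => b < a) ns ->
  2 <= nth 0 ns s.-1 ->
  one_realization (Bedges s ns) (Bedges s ns) ns.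
Proof. by move=> h1 h2 h3 h4; apply: main_thm. Qed.
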